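(* Let $\Theta\subseteq\mathbb{R}^p$ be convex, and let $f:\mathbb{R}^p\to\mathbb{R}$ be continuous and bounded below, such that for all $\theta,\theta'\in\Theta$ the directional derivative $\nabla f(\theta,\theta'-\theta)$ exists. Let $\theta_0\in\Theta$ and consider the sequence generated by: for $n\ge1$, choose a surrogate $g_n$ of $f$ and set $\theta_n\in\operatorname{arg\,min}_{\theta\in\Theta}g_n(\theta)$. Assume that for every $n\ge 1$, $g_n\in\mathcal{S}_L(f,\theta_{n-1})$ and that either all $g_n$ are majorant functions or all $g_n$ are $\rho$-strongly convex (for some $\rho>0$). Then $(f(\theta_n))_{n\ge0}$ is monotonically non-increasing and $(\theta_n)_{n\ge0}$ satisfies the asymptotic stationary point condition $$\liminf_{n\to+\infty}\ \inf_{\theta\in\Theta\setminus\{\theta_n\}}\frac{\nabla f(\theta_n,\theta-\theta_n)}{\|\theta-\theta_n\|_2}\ \ge 0.$$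
   Context: The directional derivative of $f$ at $\theta$ in direction $\theta'-\theta$ is $\nabla f(\theta,\theta'-\theta)\triangleq\lim_{t\to0^+}\frac{f(\theta+t(\theta'-\theta))-f(\theta)}{t}$. First-order surrogates: $g:\mathbb{R}^p\to\mathbb{R}$ belongs to $\mathcal{S}_L(f,\kappa)$ if (a) $g(\theta')\ge f(\theta')$ for all $\theta'\in\operatorname{arg\,min}_{\theta\in\Theta}g(\theta)$, and (b) $h\triangleq g-f$ is differentiable with $L$-Lipschitz gradient, $h(\kappa)=0$ and $\nabla h(\kappa)=0$. $g$ is called a majorant function if $g\ge f$ everywhere. The minimizers $\theta_n$ are assumed to exist. *)

(* Defs.v *)
From HB Require Import structures.
From mathcomp Require Import all_boot all_order all_algebra.
From mathcomp Require Import all_classical all_reals all_analysis.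
Set Implicit Arguments. Unset Strict Implicit. Unset Printing Implicit Defensive.
Import Order.TTheory GRing.Theory Num.Theory.
Import numFieldNormedType.Exports.
Local Open Scope classical_set_scope.
Local Open Scope ring_scope.

Section Defs.
Variables (R : realType) (p : nat).
Local Notation V := 'rV[R]_p.

Definition norm2 (v : V) : R := Num.sqrt (\sum_(i < p) v ord0 i ^+ 2).

Definition convex_set_rV (Theta : set V) : Prop :=
  forall x y t, Theta x -> Theta y -> 0 <= t <= 1 ->
    Theta ((1 - t) *: x + t *: y).

Definition dquot (f : V -> R) (x v : V) : R -> R :=
  fun t => (f (x + t *: v) - f x) / t.

Definition dirder_exists (f : V -> R) (x v : V) : Prop :=
  cvg (dquot f x v @ 0^'+).

Definition dirder (f : V -> R) (x v : V) : R := lim (dquot f x v @ 0^'+).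

Definition grad (h : V -> R) (x : V) : V :=
  \row_(j < p) ('d h x (delta_mx ord0 j : V) : R).

Definition argmin_on (Theta : set V) (g : V -> R) : set V :=
  [set th | Theta th /\ forall th', Theta th' -> g th <= g th'].

Definition first_order_surrogate (Theta : set V) (L : R) (f : V -> R)
    (kappa : V) (g : V -> R) : Prop :=
  (forall th', argmin_on Theta g th' -> f th' <= g th') /\
  let h := fun th => g th - f th in
  (forall x, differentiable h x) /\
  (forall x y, norm2 (grad h x - grad h y) <= L * norm2 (x - y)) /\
  h kappa = 0 /\ grad h kappa = 0.

Definition majorant (f g : V -> R) : Prop := forall th, f th <= g th.

Definition strongly_convex (rho : R) (g : V -> R) : Prop :=
  forall x y t, 0 <= t <= 1 ->
    g ((1 - t) *: x + t *: y) <=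
      (1 - t) * g x + t * g y - rho / 2 * t * (1 - t) * norm2 (x - y) ^+ 2.

End Defs.

(* Main.v *)
Require Import Defs.
From HB Require Import structures.
From mathcomp Require Import all_boot all_order all_algebra.
From mathcomp Require Import all_classical all_reals all_analysis.
From mathcomp Require Import ring lra.
Import Order.TTheory GRing.Theory Num.Theory.
Import numFieldNormedType.Exports.
Local Open Scope classical_set_scope.
Local Open Scope ring_scope.
Section S.
Context {R : realType} {p : nat}.
Local Notation V := 'rV[R]_p.

Lemma comp_le_norm2 (v : V) j : `|v ord0 j| <= norm2 v.
Proof.
rewrite /norm2 -sqrtr_sqr; apply: ler_wsqrtr.
rewrite (bigD1 j) //= lerDl; apply: sumr_ge0 => i _; exact: sqr_ge0.
Qed.

Lemma norm2_gt0 (v : V) : v != 0 -> 0 < norm2 v.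
Proof.
move=> v0; have [j vj] : exists j, v ord0 j != 0.
  apply/existsP; apply: contraR v0 => /existsPn H; apply/eqP/rowP => j.
  by move: (H j); rewrite negbK mxE => /eqP.
by apply: (lt_le_trans _ (comp_le_norm2 v j)); rewrite normr_gt0.
Qed.

Lemma norm2_ge0 (v : V) : 0 <= norm2 v.
Proof. exact: sqrtr_ge0. Qed.

Lemma norm2_delta (c : R) (j : 'I_p) : norm2 (c *: (delta_mx ord0 j : V)) = `|c|.
Proof.
rewrite /norm2 (bigD1 j) //= big1 ?addr0.
  by rewrite !mxE !eqxx /= mulr1 sqrtr_sqr.
by move=> i ij; rewrite !mxE eqxx /= (negbTE ij) mulr0 expr0n.
Qed.

Lemma dh_sum (h : V -> R) x (v : V) :
  'd h x v = \sum_(j < p) v ord0 j * grad h x ord0 j.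
Proof.
rewrite {1}[v]row_sum_delta linear_sum; apply: eq_bigr => j _.
by rewrite linearZ /= /grad mxE.
Qed.

Lemma dh_bound (h : V -> R) x (v : V) :
  `|'d h x v| <= (\sum_(j < p) `|grad h x ord0 j|) * norm2 v.
Proof.
rewrite dh_sum mulr_suml; apply: (le_trans (ler_norm_sum _ _ _)).
apply: ler_sum => j _; rewrite normrM mulrC; apply: ler_wpM2l => //.
exact: comp_le_norm2.
Qed.

Lemma punct_right (f : R -> R) (l : R) : f @ 0^' --> l -> f @ 0^'+ --> l.
Proof.
move=> cv; apply: cvg_trans cv; apply: cvg_app.
apply: within_subset => u /= u0; by rewrite gt_eqF.
Qed.

Lemma dquot_cvg_d (h : V -> R) x v : differentiable h x ->
  dquot h x v @ 0^'+ --> 'd h x v.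
Proof.
move=> dh; have := @diff_derivable _ _ _ h x v dh; rewrite /derivable => cv.
have E : dquot h x v = (fun t : R => t^-1 *: ((h \o shift x) (t *: v) - h x)).
  by apply: boolp.funext => t; rewrite /dquot /= [t *: v + x]addrC mulrC.
rewrite E -(deriveE v dh); apply: punct_right; exact: cv.
Qed.

Lemma phi_derive (h : V -> R) (x v : V) (t : R) : (forall y, differentiable h y) ->
  is_derive t (1 : R) (fun s : R => h (x + s *: v)) ('d h (x + t *: v) v).
Proof.
move=> dh.
have E : (fun s : R => s^-1 *: (((fun s => h (x + s *: v)) \o shift t) (s *: 1) - h (x + t *: v)))
   = (fun s : R => s^-1 *: ((h \o shift (x + t *: v)) (s *: v) - h (x + t *: v))).
  apply: boolp.funext => s /=; congr (_ *: (h _ - _)).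
  by rewrite -[s *: (1:R)]/(s * 1) mulr1 scalerDl addrCA addrA.
split; first by rewrite /derivable E; exact: diff_derivable.
by rewrite /derive E -deriveE.
Qed.

Lemma grad_comp_lip (h : V -> R) (L : R) (y z : V) j :
  (forall y z, norm2 (grad h y - grad h z) <= L * norm2 (y - z)) ->
  `|grad h y ord0 j - grad h z ord0 j| <= L * norm2 (y - z).
Proof.
move=> lip; apply: le_trans _ (lip y z).
have := comp_le_norm2 (grad h y - grad h z) j.
by rewrite [(grad h y - grad h z) ord0 j]mxE [(- grad h z) ord0 j]mxE.
Qed.

Lemma descent (h : V -> R) (L : R) (x : V) (j : 'I_p) (s : R) :
  0 <= L -> (forall y, differentiable h y) ->
  (forall y z, norm2 (grad h y - grad h z) <= L * norm2 (y - z)) ->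
  h (x + s *: (delta_mx ord0 j : V)) <= h x + s * grad h x ord0 j + L * s ^+ 2.
Proof.
move=> L0 dh lip.
set e : V := delta_mx ord0 j.
pose phi := fun c : R => h (x + c *: e).
pose G := fun c : R => 'd h (x + c *: e) e.
have GE c : G c = grad h (x + c *: e) ord0 j by rewrite /G /grad mxE.
have dphi c : is_derive c (1 : R) phi (G c) by exact: phi_derive.
have cphi a b : {within `[a, b], continuous phi}.
  apply: derivable_within_continuous => c _; by case: (dphi c).
have Gb c : `|G c - G 0| <= L * `|c|.
  rewrite !GE; apply: le_trans (grad_comp_lip _ _ _ _ j lip) _.
  by rewrite scale0r addr0 addrAC subrr add0r norm2_delta.
have [c [cs Hc]] : exists c, `|c| <= `|s| /\ phi s - phi 0 = G c * s.
  have [s0|s0] := leP 0 s.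
    have [c cI Hc] := @MVT_segment R phi G 0 s s0 (fun c _ => dphi c) (cphi 0 s).
    exists c; split; last by rewrite Hc subr0.
    move: cI; rewrite in_itv /= => /andP[c0 cs].
    by rewrite !ger0_norm // (le_trans c0 cs).
  have [c cI Hc] := @MVT_segment R phi G s 0 (ltW s0) (fun c _ => dphi c) (cphi s 0).
  exists c; split.
    move: cI; rewrite in_itv /= => /andP[sc c0].
    by rewrite !ler0_norm ?(ltW s0) // lerN2.
  by rewrite -opprB Hc add0r mulrN opprK.
have phi0 : phi 0 = h x by rewrite /phi scale0r addr0.
have G0 : G 0 = grad h x ord0 j by rewrite GE scale0r addr0.
have E : h (x + s *: e) = phi 0 + G 0 * s + (G c - G 0) * s.
  have -> : h (x + s *: e) = phi s by [].
  have -> : phi s = phi 0 + G c * s by rewrite -Hc addrCA subrr addr0.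
  by move: (phi 0) (G c) (G 0) => P A B; rewrite -addrA -mulrDl addrCA subrr addr0.
have H1 : (G c - G 0) * s <= L * s ^+ 2.
  apply: le_trans (ler_norm _) _; rewrite normrM.
  apply: (@le_trans _ _ (L * `|c| * `|s|)).
    by apply: ler_wpM2r => //; exact: Gb.
  rewrite -mulrA -(real_normK (num_real s)) expr2; apply: ler_wpM2l => //.
  by apply: ler_wpM2r.
rewrite E phi0; apply: lerD => //.
by rewrite G0 mulrC.
Qed.

Lemma maj_bound (h : V -> R) (L : R) (x : V) (j : 'I_p) :
  0 < L -> (forall y, 0 <= h y) -> (forall y, differentiable h y) ->
  (forall y z, norm2 (grad h y - grad h z) <= L * norm2 (y - z)) ->
  grad h x ord0 j ^+ 2 <= 4 * L * h x.
Proof.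
move=> L0 hpos dh lip.
set a := grad h x ord0 j.
have H := descent h L x j (- a / (2 * L)) (ltW L0) dh lip.
have H0 := hpos (x + (- a / (2 * L)) *: (delta_mx ord0 j : V)).
have E : h x + - a / (2 * L) * a + L * (- a / (2 * L)) ^+ 2
         = h x - a ^+ 2 / (4 * L).
  by field; rewrite gt_eqF.
have := le_trans H0 H; rewrite E subr_ge0 ler_pdivrMr ?mulr_gt0 //.
by rewrite mulrC.
Qed.

Lemma dirder_lb (Theta : set V) (f g : V -> R) (x th : V) :
  convex_set_rV Theta -> Theta th -> argmin_on Theta g x ->
  differentiable (fun y => g y - f y) x -> dirder_exists f x (th - x) ->
  - 'd (fun y => g y - f y) x (th - x) <= dirder f x (th - x).
Proof.
move=> cvx Tth [Tx xmin] dh de.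
set h := fun y => g y - f y.
have cf : dquot f x (th - x) @ 0^'+ --> dirder f x (th - x) := de.
have ch := dquot_cvg_d h x (th - x) dh.
have cg : (dquot f x (th - x) + dquot h x (th - x)) @ 0^'+ -->
    dirder f x (th - x) + 'd h x (th - x) by apply: cvgD.
have : 0 <= dirder f x (th - x) + 'd h x (th - x).
  apply: (cvgr_to_ge cg); near=> t.
  have t0 : 0 < t by near: t; exact: nbhs_right_gt.
  have t1 : t <= 1 by near: t; apply: nbhs_right_le; exact: ltr01.
  have Tt : Theta (x + t *: (th - x)).
    have := cvx x th t Tx Tth; rewrite (ltW t0) t1 => /(_ isT).
    by rewrite scalerBl scale1r scalerBr addrAC -addrA; apply.
  rewrite /= /dquot /h -mulrDl divr_ge0 ?(ltW t0) //.
  have := xmin _ Tt; rewrite -subr_ge0.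
  move=> H; apply: le_trans H _.
  change (g (x + t *: (th - x)) - g x <= (f (x + t *: (th - x)) - f x) + (g (x + t *: (th - x)) - f (x + t *: (th - x)) - (g x - f x))).
  lra.
by move=> ?; lra.
Unshelve. all: by end_near.
Qed.
End S.

Section S2.
Context {R : realType}.

Lemma sq_small (a e : R) : 0 <= e -> a ^+ 2 <= e ^+ 2 -> `|a| <= e.
Proof.
move=> e0 H; rewrite -ler_sqr ?nnegrE ?normr_ge0 //.
by rewrite real_normK ?num_real.
Qed.

Lemma mono_le (u : nat -> R) : (forall n, u n.+1 <= u n) ->
  forall n k, (n <= k)%N -> u k <= u n.
Proof.
move=> dec n k /subnK <-; elim: (k - n)%N => [|i IH]; first by rewrite add0n.
by rewrite addSn; apply: le_trans (dec _) IH.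
Qed.

Lemma dec_small (u : nat -> R) (m : R) : (forall n, u n.+1 <= u n) ->
  (forall n, m <= u n) -> forall eta, 0 < eta ->
  exists N, forall n, (N <= n)%N -> u n - u n.+1 < eta.
Proof.
move=> dec lb eta eta0.
have hl : has_lbound (range u) by exists m => _ [n _ <-].
have hi : has_inf (range u) by split => //; exists (u 0%N), 0%N.
have [_ [N _ <-] HN] := inf_adherent eta0 hi.
exists N => n Nn.
have h1 : u n <= u N := mono_le _ dec _ _ Nn.
have h2 : inf (range u) <= u n.+1 by apply: ge_inf => //; exists n.+1.
lra.
Qed.

Lemma ereal_ge0 (X : \bar R) : (forall e : R, 0 < e -> ((- e)%:E <= X)%E) -> (0 <= X)%E.
Proof.
case: X => [r| |] H //.
  rewrite lee_fin leNgt; apply/negP => r0.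
  have h : ((- (- r / 2))%:E <= r%:E)%E by apply: H; lra.
  rewrite lee_fin in h; lra.
  by have := H 1 ltr01.
Qed.

Lemma liminf_ge0 (U : (\bar R)^nat) :
  (forall e : R, 0 < e -> exists N, forall n, (N <= n)%N -> ((- e)%:E <= U n)%E) ->
  (0 <= limn_einf U)%E.
Proof.
move=> H; rewrite limn_einf_lim.
have -> : limn (einfs U) = ereal_sup (range (einfs U)).
  by apply/cvg_lim => //; exact: cvg_einfs_sup.
apply: ereal_ge0 => e e0; have [N HN] := H e e0.
apply: le_trans (ereal_sup_ubound _) ; last by exists N.
by apply: le_ereal_inf_tmp => _ [k /= Nk <-]; exact: HN.
Qed.
End S2.
Theorem proposition2p1 (R : realType) (p : nat) (Theta : set 'rV[R]_p)
  (f : 'rV[R]_p -> R) (L : R) (g : nat -> 'rV[R]_p -> R)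
  (theta : nat -> 'rV[R]_p) :
  convex_set_rV Theta ->
  continuous f ->
  (exists m : R, forall x, m <= f x) ->
  (forall th th', Theta th -> Theta th' -> dirder_exists f th (th' - th)) ->
  Theta (theta 0%N) ->
  (forall n, (1 <= n)%N -> argmin_on Theta (g n) (theta n)) ->
  (forall n, (1 <= n)%N ->
     first_order_surrogate Theta L f (theta n.-1) (g n)) ->
  ((forall n, (1 <= n)%N -> majorant f (g n)) \/
   (exists rho : R, 0 < rho /\
      forall n, (1 <= n)%N -> strongly_convex rho (g n))) ->
  (forall n, f (theta n.+1) <= f (theta n)) /\
  (0 <= limn_einf (fun n =>
          ereal_inf [set ((dirder f (theta n) (th - theta n)
                            / norm2 (th - theta n))%:E)
                     | th in Theta `\ theta n]))%E.
Proof.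
move=> cvx cf [m fm] dex T0 amin surr cases.
have Tn : forall n, Theta (theta n).
  by case=> [|n] //; have [] := amin n.+1 isT.
pose hh n := fun y => g n y - f y.
have gfeq n : g n.+1 (theta n) = f (theta n).
  have [_ [_ [_ [h0 _]]]] := surr n.+1 isT.
  by apply/eqP; rewrite -subr_eq0; apply/eqP; exact: h0.
have fleg n : f (theta n.+1) <= g n.+1 (theta n.+1).
  by have [ha _] := surr n.+1 isT; exact: ha (amin n.+1 isT).
have gle n : g n.+1 (theta n.+1) <= g n.+1 (theta n).
  by have [_ hmin] := amin n.+1 isT; exact: hmin (Tn n).
have dec n : f (theta n.+1) <= f (theta n).
  by rewrite -(gfeq n); apply: le_trans (fleg n) (gle n).
split => //.
have aL n j : `|grad (hh n.+1) (theta n.+1) ord0 j| <= L * norm2 (theta n.+1 - theta n).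
  have [_ [_ [lip [_ g0]]]] := surr n.+1 isT.
  have := grad_comp_lip _ _ (theta n.+1) (theta n) j lip.
  by rewrite g0 (_ : (0 : 'rV[R]_p) ord0 j = 0) ?mxE // subr0.
have Kb : exists K, 0 <= K /\ forall n j,
   grad (hh n.+1) (theta n.+1) ord0 j ^+ 2 <= K * (f (theta n) - f (theta n.+1)).
  case: cases => [maj|[rho [rho0 sc]]].
  - have [L0|L0] := ltP 0 L.
    + exists (4 * L); split; first by rewrite mulr_ge0 ?ltW.
      move=> n j; have [_ [dh [lip _]]] := surr n.+1 isT.
      have hpos y : 0 <= hh n.+1 y by rewrite /hh subr_ge0; exact: maj.
      apply: le_trans (maj_bound _ _ _ j L0 hpos dh lip) _.
      apply: ler_wpM2l; first by rewrite mulr_ge0 ?ltW.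
      by have := gle n; have := gfeq n; rewrite /hh /= => ? ?; lra.
    + exists 0; split => // n j.
      have D0 := norm2_ge0 (theta n.+1 - theta n).
      have a0 : `|grad (hh n.+1) (theta n.+1) ord0 j| = 0.
        apply/eqP; rewrite eq_le normr_ge0 andbT.
        by apply: le_trans (aL n j) _; rewrite mulr_le0_ge0.
      by rewrite -real_normK ?num_real // a0 expr2 !mul0r.
  - exists (L ^+ 2 * (4 / rho)); split.
      by rewrite mulr_ge0 ?sqr_ge0 // divr_ge0 // ltW.
    move=> n j.
    set D := norm2 (theta n.+1 - theta n).
    have hsc := sc n.+1 isT (theta n.+1) (theta n) (1/2).
    have z_in : Theta ((1 - 1/2) *: theta n.+1 + 1/2 *: theta n).
      by apply: cvx => //; apply/andP; split; lra.
    have [_ hmin] := amin n.+1 isT.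
    have H1 := hmin _ z_in.
    have H2 : g n.+1 ((1 - 1 / 2) *: theta n.+1 + 1 / 2 *: theta n) <=
       (1 - 1 / 2) * g n.+1 (theta n.+1) + 1 / 2 * g n.+1 (theta n) -
       rho / 2 * (1 / 2) * (1 - 1 / 2) * D ^+ 2.
      by apply: hsc; apply/andP; split; lra.
    have Q : rho * D ^+ 2 <= 4 * (f (theta n) - f (theta n.+1)).
      have H3 := le_trans H1 H2; rewrite (gfeq n) in H3.
      have := fleg n; lra.
    have a2 : grad (hh n.+1) (theta n.+1) ord0 j ^+ 2 <= L ^+ 2 * D ^+ 2.
      have := ler_pM (normr_ge0 _) (normr_ge0 _) (aL n j) (aL n j).
      by rewrite -expr2 real_normK ?num_real // -expr2 exprMn.
    apply: le_trans a2 _; rewrite -[_ * _ * (_ - _)]mulrA; apply: ler_wpM2l; first exact: sqr_ge0.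
    by rewrite mulrAC ler_pdivlMr // mulrC.
have [K [K0 Kb']] := Kb.
pose c := fun n => \sum_(j < p) `|grad (hh n.+1) (theta n.+1) ord0 j|.
have lbn n th : Theta th -> th != theta n.+1 ->
    - c n <= dirder f (theta n.+1) (th - theta n.+1) / norm2 (th - theta n.+1).
  move=> Tth nth.
  have [_ [dh _]] := surr n.+1 isT.
  have N0 : 0 < norm2 (th - theta n.+1) by apply: norm2_gt0; rewrite subr_eq0.
  rewrite ler_pdivlMr // mulNr.
  have H1 := dirder_lb _ _ _ _ _ cvx Tth (amin n.+1 isT) (dh _) (dex _ _ (Tn n.+1) Tth).
  have H2 := dh_bound (hh n.+1) (theta n.+1) (th - theta n.+1).
  apply: le_trans H1; rewrite lerN2; exact: le_trans (ler_norm _) H2.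
have csmall e : 0 < e -> exists N, forall n, (N <= n)%N -> c n <= e.
  move=> e0.
  pose e' := e / (p%:R + 1).
  have p0 : 0 <= p%:R :> R by exact: ler0n.
  have e'0 : 0 < e' by rewrite divr_gt0 //; lra.
  have eta0 : 0 < e' ^+ 2 / (K + 1) by rewrite divr_gt0 ?exprn_gt0 //; lra.
  have [N HN] := dec_small (fun n => f (theta n)) m dec (fun n => fm (theta n)) _ eta0.
  exists N => n Nn.
  have Hj j : `|grad (hh n.+1) (theta n.+1) ord0 j| <= e'.
    apply: sq_small; first exact: ltW.
    apply: le_trans (Kb' n j) _.
    have hn := HN n Nn.
    apply: (@le_trans _ _ (K * (e' ^+ 2 / (K + 1)))).
      by rewrite ler_wpM2l // ltW.
    rewrite mulrA ler_pdivrMr; last lra.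
    have := sqr_ge0 e'; nra.
  rewrite /c; apply: le_trans (ler_sum _ (fun j _ => Hj j)) _.
  rewrite sumr_const card_ord -mulr_natr /e' mulrAC ler_pdivrMr; last lra.
  by apply: ler_wpM2l; [exact: ltW | lra].
apply: liminf_ge0 => e e0.
have [N HN] := csmall e e0.
exists N.+1 => -[//|n] Nn.
apply: le_ereal_inf_tmp => _ [th [Tth nth] <-].
rewrite lee_fin; apply: le_trans (lbn n th Tth _); last by apply/eqP.
by rewrite lerN2; exact: HN.
Qed.
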